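(* Let $\Psi=\begin{bmatrix}\Psi_{11}&\Psi_{12}\\ \Psi_{12}^\top&\Psi_{22}\end{bmatrix}\in\mathbb{R}^{(p+q)\times(p+q)}$ be symmetric with $\Psi_{11}\in\mathbb{R}^{p\times p}$, $\Psi_{22}<0$ and $\Psi|\Psi_{22}:=\Psi_{11}-\Psi_{12}\Psi_{22}^{-1}\Psi_{12}^\top>0$, and let $\mathcal M:=\{Z\in\mathbb{R}^{p\times q}:\begin{bmatrix}I\\Z^\top\end{bmatrix}^\top\Psi\begin{bmatrix}I\\Z^\top\end{bmatrix}\ge0\}$. Let $V\in\mathbb{R}^{q\times\hat q}$ and $W\in\mathbb{R}^{p\times\hat p}$ have full column rank, with $\hat p\le p$, $\hat q\le q$, and define $\mathcal M_{V,W}:=\{W^\top ZV:Z\in\mathcal M\}$ and $$\Psi_{V,W}:=\begin{bmatrix} W^\top\big(\Psi|\Psi_{22}+\Psi_{12}\Psi_{22}^{-1}V(V^\top\Psi_{22}^{-1}V)^{-1}V^\top\Psi_{22}^{-1}\Psi_{12}^\top\big)W & W^\top\Psi_{12}\Psi_{22}^{-1}V(V^\top\Psi_{22}^{-1}V)^{-1}\\ (V^\top\Psi_{22}^{-1}V)^{-1}V^\top\Psi_{22}^{-1}\Psi_{12}^\top W&(V^\top\Psi_{22}^{-1}V)^{-1}\end{bmatrix}.$$ Then $$\mathcal M_{V,W}=\Big\{\hat Z\in\mathbb{R}^{\hat p\times\hat q}:\begin{bmatrix}I\\ \hat Z^\top\end{bmatrix}^\top\Psi_{V,W}\begin{bmatrix}I\\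 \hat Z^\top\end{bmatrix}\ge0\Big\}.$$ *)

(* Defs.v *)
From HB Require Import structures.
From mathcomp Require Import all_boot all_order all_algebra.
From mathcomp Require Import reals.
Set Implicit Arguments. Unset Strict Implicit. Unset Printing Implicit Defensive.
Import Order.TTheory GRing.Theory Num.Theory.
Local Open Scope ring_scope.

Definition psd {R : realType} {n : nat} (A : 'M[R]_n) : Prop :=
  forall x : 'cV[R]_n, 0 <= (x^T *m A *m x) 0 0.
Definition pd {R : realType} {n : nat} (A : 'M[R]_n) : Prop :=
  forall x : 'cV[R]_n, x != 0 -> 0 < (x^T *m A *m x) 0 0.
Definition nd {R : realType} {n : nat} (A : 'M[R]_n) : Prop :=
  forall x : 'cV[R]_n, x != 0 -> (x^T *m A *m x) 0 0 < 0.

Definition Psi11 {R : realType} {p q : nat} (Psi : 'M[R]_(p + q)) : 'M[R]_p := ulsubmx Psi.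
Definition Psi12 {R : realType} {p q : nat} (Psi : 'M[R]_(p + q)) : 'M[R]_(p, q) := ursubmx Psi.
Definition Psi22 {R : realType} {p q : nat} (Psi : 'M[R]_(p + q)) : 'M[R]_q := drsubmx Psi.

Definition schur22 {R : realType} {p q : nat} (Psi : 'M[R]_(p + q)) : 'M[R]_p :=
  Psi11 Psi - Psi12 Psi *m invmx (Psi22 Psi) *m (Psi12 Psi)^T.

Definition qmat {R : realType} {p q : nat} (Psi : 'M[R]_(p + q)) (Z : 'M[R]_(p, q)) : 'M[R]_p :=
  (col_mx 1%:M Z^T)^T *m Psi *m col_mx 1%:M Z^T.

Definition inM {R : realType} {p q : nat} (Psi : 'M[R]_(p + q)) (Z : 'M[R]_(p, q)) : Prop :=
  psd (qmat Psi Z).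

Definition inMVW {R : realType} {p q ph qh : nat} (Psi : 'M[R]_(p + q))
  (V : 'M[R]_(q, qh)) (W : 'M[R]_(p, ph)) (Zh : 'M[R]_(ph, qh)) : Prop :=
  exists Z : 'M[R]_(p, q), inM Psi Z /\ Zh = W^T *m Z *m V.

Definition PsiVW {R : realType} {p q ph qh : nat} (Psi : 'M[R]_(p + q))
  (V : 'M[R]_(q, qh)) (W : 'M[R]_(p, ph)) : 'M[R]_(ph + qh) :=
  let iP22 := invmx (Psi22 Psi) in
  let G := invmx (V^T *m iP22 *m V) in
  block_mx
    (W^T *m (schur22 Psi + Psi12 Psi *m iP22 *m V *m G *m V^T *m iP22 *m (Psi12 Psi)^T) *m W)
    (W^T *m Psi12 Psi *m iP22 *m V *m G)
    (G *m V^T *m iP22 *m (Psi12 Psi)^T *m W)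
    G.

(* Main.v *)
Require Import Defs.
From HB Require Import structures.
From mathcomp Require Import all_boot all_order all_algebra.
From mathcomp Require Import reals.
Import Order.TTheory GRing.Theory Num.Theory.
Local Open Scope ring_scope.

Module Helpers.
Set Implicit Arguments. Unset Strict Implicit.

Lemma zre (V : zmodType) (A a b c x : V) : A + a + (b + c) = A - x + (c + b + (a + x)).
Proof.
rewrite -!addrA (addrC a x) (addrCA b x) (addrCA c x) addKr.
by congr (_ + _); rewrite [RHS]addrC [in RHS](addrC b) addrA.
Qed.

Section H.
Variable R : realType.

Lemma qmat_block p q (A : 'M[R]_p) (B : 'M[R]_(p,q)) (C : 'M[R]_(q,p)) (D : 'M[R]_q) Z :
  qmat (block_mx A B C D) Z = A + Z *m C + (B + Z *m D) *m Z^T.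
Proof.
by rewrite /qmat tr_col_mx trmx1 trmxK mul_row_block mul_row_col !mul1mx mulmx1.
Qed.

Lemma complete_sq m n (A : 'M[R]_m) (B : 'M[R]_(m,n)) (D : 'M[R]_n) (Z : 'M[R]_(m,n)) :
  D \in unitmx -> D^T = D ->
  A + Z *m B^T + (B + Z *m D) *m Z^T =
  (A - B *m invmx D *m B^T) + (Z + B *m invmx D) *m D *m (Z + B *m invmx D)^T.
Proof.
move=> uD DT.
have iDT : (invmx D)^T = invmx D by rewrite trmx_inv DT.
rewrite linearD /= trmx_mul iDT mulmxDl (mulmxDl Z (B *m invmx D) D) mulmxKV //.
rewrite mulmxDr !mulmxDl !mulmxA mulmxK //.
exact: zre.
Qed.

Lemma psd_cong m n (A : 'M[R]_n) (F : 'M[R]_(m, n)) : psd A -> psd (F *m A *m F^T).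
Proof.
move=> hA x; have := hA (F^T *m x).
by rewrite trmx_mul trmxK !mulmxA.
Qed.

Lemma psdD n (A B : 'M[R]_n) : psd A -> psd B -> psd (A + B).
Proof.
move=> hA hB x; rewrite mulmxDr mulmxDl mxE addr_ge0 //.
Qed.

Lemma pd_psd n (A : 'M[R]_n) : pd A -> psd A.
Proof.
move=> hA x; have [->|nz] := eqVneq x 0; first by rewrite mulmx0 mxE.
exact/ltW/hA.
Qed.

Lemma nd_nsd n (A : 'M[R]_n) : nd A -> psd (- A).
Proof.
move=> hA x; have [->|nz] := eqVneq x 0; first by rewrite mulmx0 mxE.
by rewrite mulmxN mulNmx mxE oppr_ge0; exact/ltW/hA.
Qed.


Lemma unit_of_form n (A : 'M[R]_n) :
  (forall x : 'cV[R]_n, x != 0 -> (x^T *m A *m x) 0 0 != 0) -> A \in unitmx.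
Proof.
move=> h; rewrite unitmxE unitfE; apply/negP => /det0P [v nz vA].
have := h v^T; rewrite trmx_eq0 trmxK vA mul0mx mxE eqxx => /(_ nz).
by [].
Qed.

Lemma nd_unit n (A : 'M[R]_n) : nd A -> A \in unitmx.
Proof. by move=> h; apply: unit_of_form => x /h /lt_eqF ->. Qed.

Lemma pd_unit n (A : 'M[R]_n) : pd A -> A \in unitmx.
Proof. by move=> h; apply: unit_of_form => x /h /gt_eqF ->. Qed.

Lemma inv_form n (A : 'M[R]_n) (x : 'cV[R]_n) : A \in unitmx -> A^T = A ->
  x^T *m invmx A *m x = (invmx A *m x)^T *m A *m (invmx A *m x).
Proof.
move=> uA AT; rewrite trmx_mul trmx_inv AT !mulmxA mulmxKV //.
Qed.

Lemma inv_nz n (A : 'M[R]_n) (x : 'cV[R]_n) : A \in unitmx -> x != 0 -> invmx A *m x != 0.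
Proof.
move=> uA; apply: contraNneq => h.
by rewrite -(mulKVmx uA x) h mulmx0.
Qed.

Lemma nd_inv n (A : 'M[R]_n) : A^T = A -> nd A -> nd (invmx A).
Proof.
move=> AT h x nz; have uA := nd_unit h.
by rewrite inv_form //; apply: h; apply: inv_nz.
Qed.

Lemma inj_rank m n (V : 'M[R]_(m, n)) : \rank V = n ->
  forall y : 'cV[R]_n, y != 0 -> V *m y != 0.
Proof.
move=> rV y nz.
have fr : row_free V^T by rewrite /row_free mxrank_tr rV.
by rewrite -trmx_eq0 trmx_mul mulmx_free_eq0 // trmx_eq0.
Qed.

Lemma nd_cong m n (A : 'M[R]_m) (V : 'M[R]_(m, n)) : \rank V = n -> nd A -> nd (V^T *m A *m V).
Proof.
move=> rV h y nz; have := h _ (inj_rank rV nz).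
by rewrite trmx_mul !mulmxA.
Qed.

Lemma pd_cong m n (A : 'M[R]_m) (V : 'M[R]_(m, n)) : \rank V = n -> pd A -> pd (V^T *m A *m V).
Proof.
move=> rV h y nz; have := h _ (inj_rank rV nz).
by rewrite trmx_mul !mulmxA.
Qed.


Lemma psd_proj n k (M : 'M[R]_n) (B : 'M[R]_(n, k)) (H : 'M[R]_k) :
  psd M -> M^T = M -> H^T = H -> H *m (B^T *m M *m B) *m H = H ->
  psd (M - M *m B *m H *m B^T *m M).
Proof.
move=> hM MT HT hH.
set X := B *m H *m B^T *m M.
have XT : X^T = M *m B *m H *m B^T by rewrite /X !trmx_mul trmxK MT HT !mulmxA.
have e : (1%:M - X)^T *m M *m (1%:M - X) = M - M *m B *m H *m B^T *m M.
  rewrite [(_ - X)^T]linearB /= trmx1 XT mulmxBr mulmx1 !mulmxBl !mul1mx /X !mulmxA.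
  have -> : M *m B *m H *m B^T *m M *m B *m H *m B^T *m M = M *m B *m H *m B^T *m M.
    by rewrite -[in RHS]hH !mulmxA.
  by rewrite subrr subr0.
rewrite -e; have := psd_cong (1%:M - X)^T hM; by rewrite trmxK.
Qed.

End H.

Unset Implicit Arguments. Set Strict Implicit.
End Helpers.
Import Helpers.

Theorem theoremA1 (R : realType) (p q ph qh : nat) (Psi : 'M[R]_(p + q))
  (V : 'M[R]_(q, qh)) (W : 'M[R]_(p, ph))
  (Hsym : Psi^T = Psi)
  (H22 : nd (Psi22 Psi))
  (Hschur : pd (schur22 Psi))
  (HV : \rank V = qh) (HW : \rank W = ph)
  (Hph : (ph <= p)%N) (Hqh : (qh <= q)%N) :
  forall Zh : 'M[R]_(ph, qh),
    inMVW Psi V W Zh <-> psd (qmat (PsiVW Psi V W) Zh).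
Proof.
move=> Zh.
have P22T : (Psi22 Psi)^T = Psi22 Psi by rewrite /Psi22 trmx_drsub Hsym.
have P21 : dlsubmx Psi = (Psi12 Psi)^T by rewrite /Psi12 trmx_ursub Hsym.
have P11T : (Psi11 Psi)^T = Psi11 Psi by rewrite /Psi11 trmx_ulsub Hsym.
have uP : Psi22 Psi \in unitmx := nd_unit H22.
have iPT : (invmx (Psi22 Psi))^T = invmx (Psi22 Psi) by rewrite trmx_inv P22T.
have ST : (schur22 Psi)^T = schur22 Psi.
  by rewrite /schur22 linearB /= P11T !trmx_mul trmxK iPT !mulmxA.
have hqPsi : forall Z, qmat Psi Z = schur22 Psi +
   (Z + Psi12 Psi *m invmx (Psi22 Psi)) *m Psi22 Psi *m (Z + Psi12 Psi *m invmx (Psi22 Psi))^T.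
  move=> Z; rewrite -[in LHS](submxK Psi) qmat_block P21 complete_sq //.
rewrite /PsiVW /=.
set P12 := Psi12 Psi in P21 hqPsi *.
set P22 := Psi22 Psi in H22 P22T uP iPT hqPsi *.
set iP := invmx P22 in iPT hqPsi *.
set S := schur22 Psi in Hschur ST hqPsi *.
set K := V^T *m iP *m V.
have ndK : nd K := nd_cong HV (nd_inv P22T H22).
have uK := nd_unit ndK.
have KT : K^T = K by rewrite !trmx_mul trmxK iPT mulmxA.
set G := invmx K.
have GT : G^T = G by rewrite trmx_inv KT.
have uG : G \in unitmx by rewrite unitmx_inv.
set L := W^T *m S *m W.
have pdL : pd L := pd_cong HW Hschur.
have uL := pd_unit pdL.
have LT : L^T = L by rewrite !trmx_mul trmxK ST mulmxA.

have GK : forall m (X : 'M[R]_(m, qh)), X *m G *m V^T *m iP *m V = X.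
  by move=> m X; rewrite -!mulmxA (mulmxA V^T) mulVmx ?mulmx1.
have hqVW : qmat (block_mx
          (W^T *m (S + P12 *m iP *m V *m G *m V^T *m iP *m P12^T) *m W)
          (W^T *m P12 *m iP *m V *m G) (G *m V^T *m iP *m P12^T *m W) G) Zh
   = L + (Zh + W^T *m P12 *m iP *m V) *m G *m (Zh + W^T *m P12 *m iP *m V)^T.
  have CB : G *m V^T *m iP *m P12^T *m W = (W^T *m P12 *m iP *m V *m G)^T.
    by rewrite !trmx_mul trmxK GT iPT !mulmxA.
  rewrite qmat_block CB complete_sq // invmxK mulmxKV //.
  congr (_ + _); rewrite -CB mulmxDr mulmxDl !mulmxA addrK //.
rewrite hqVW; split.
  case=> Z [hZ ->].
  rewrite /inM hqPsi in hZ.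
  set E := Z + P12 *m iP in hZ.
  have -> : W^T *m Z *m V + W^T *m P12 *m iP *m V = W^T *m E *m V.
    by rewrite /E mulmxDr mulmxDl !mulmxA.
  have hQ : psd (V *m G *m V^T - P22).
    have := @psd_proj _ _ _ (- P22) (iP *m V) (- G) (nd_nsd H22).
    have -> : - P22 - - P22 *m (iP *m V) *m - G *m (iP *m V)^T *m - P22 = V *m G *m V^T - P22.
      rewrite trmx_mul iPT !mulNmx !mulmxN !opprK !mulmxA mulmxKV //.
      by rewrite mulNmx opprK -!mulmxA mulKVmx // !mulmxA addrC.
    apply.
    - by rewrite linearN /= P22T.
    - by rewrite linearN /= GT.
    rewrite trmx_mul iPT !mulNmx !mulmxN !opprK !mulmxA mulmxKV //.
    by rewrite mulmxN !mulNmx -[G in RHS]mul1mx -(GK _ 1%:M) mul1mx.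
  have -> : L + W^T *m E *m V *m G *m (W^T *m E *m V)^T =
     W^T *m (S + E *m P22 *m E^T + E *m (V *m G *m V^T - P22) *m E^T) *m W^T^T.
    rewrite trmxK -addrA -mulmxDl -mulmxDr (addrC P22) subrK.
    rewrite [in RHS]mulmxDr [in RHS]mulmxDl; congr (_ + _).
    by rewrite !trmx_mul trmxK !mulmxA.
  apply: psd_cong; apply: psdD => //; exact: psd_cong.
move=> hpsd.
set Y := Zh + W^T *m P12 *m iP *m V in hpsd.
set F := S *m W *m invmx L.
set E := F *m Y *m G *m V^T *m iP.
exists (E - P12 *m iP); split; last first.
  rewrite mulmxBr mulmxBl /E /F !mulmxA -/L mulmxV // mul1mx GK /Y.
  by rewrite addrK.
rewrite /inM hqPsi subrK.
have hSF : psd (S - S *m W *m invmx L *m W^T *m S).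
  apply: psd_proj => //; first exact: pd_psd.
    by rewrite trmx_inv LT.
  by rewrite -/L mulVmx // mul1mx.
have -> : S + E *m P22 *m E^T = (S - S *m W *m invmx L *m W^T *m S) + F *m (L + Y *m G *m Y^T) *m F^T.
  have h1 : F *m L *m F^T = S *m W *m invmx L *m W^T *m S.
    have LK : forall m (X : 'M[R]_(m, ph)), X *m invmx L *m W^T *m S *m W = X.
      by move=> m X; rewrite -!mulmxA (mulmxA W^T) -/L mulVmx ?mulmx1.
    by rewrite /F !trmx_mul trmx_inv LT ST !mulmxA LK.
  have h2 : E *m P22 *m E^T = F *m (Y *m G *m Y^T) *m F^T.
    rewrite /E !trmx_mul iPT trmxK GT !mulmxA mulmxKV //.
    by rewrite GK.
  by rewrite h2 mulmxDr mulmxDl h1 addrA subrK.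
apply: psdD => //; exact: psd_cong.
Qed.
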